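(* Let $M=L+S\in\mathbb{R}^{n_1\times n_2}$ where $L$ has rank $r$ and $S$ has support $\Omega$. Let $G\in\mathbb{R}^{n_1\times r_G}$ be a basis matrix such that $L_{\mathrm{new}}:=(I-GG^\top)L$ has rank $r_{\mathrm{new}}<r$, with reduced SVD $L_{\mathrm{new}}=U_{\mathrm{new}}\Sigma_{\mathrm{new}}V_{\mathrm{new}}^\top$. Let $$\Pi=\{[G\ U_{\mathrm{new}}]Y_1^\top+Y_2V_{\mathrm{new}}^\top:\ Y_1\in\mathbb{R}^{n_2\times(r_G+r_{\mathrm{new}})},\ Y_2\in\mathbb{R}^{n_1\times r_{\mathrm{new}}}\}.$$ If $\|\mathcal P_\Omega\mathcal P_\Pi\|\le 1/4$, $\lambda<3/10$, and there is a pair $(W,F)$ of $n_1\times n_2$ matrices (and a matrix $D$) obeying $$U_{\mathrm{new}}V_{\mathrm{new}}^\top+W=\lambda(\mathrm{sgn}(S)+F+\mathcal P_\Omega D)$$ with $\mathcal P_\Pi W=0$, $\|W\|\le 9/10$, $\mathcal P_\Omega F=0$, $\|F\|_\infty\le 9/10$ and $\|\mathcal P_\Omega D\|_F\le 1/4$, then $(L_{\mathrm{new}},S,L^\top G)$ is the unique solution of $$\min_{\tilde L_{\mathrm{new}},\tilde S,\tilde X}\|\tilde L_{\mathrm{new}}\|_*+\lambda\|\tilde S\|_1\ \text{ s.t. }\ \tilde L_{\mathrm{new}}+G\tilde X^\top+\tilde S=M.$$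
   Context: A basis matrix satisfies $G^\top G=I$; $[A\ B]$ is horizontal concatenation. $\mathcal P_\Pi$ is the orthogonal projection (w.r.t. the trace inner product) onto the linear space $\Pi$ of matrices; $\mathcal P_\Omega$ sets to zero all entries with index outside $\Omega$. $\|\mathcal A\|=\sup_{\|X\|_F=1}\|\mathcal A X\|_F$ for a linear operator $\mathcal A$. $\|W\|$ is the spectral norm, $\|F\|_\infty=\max|F_{ij}|$, $\|\cdot\|_F$ Frobenius norm, $\|\cdot\|_*$ nuclear norm, $\|X\|_1=\sum|X_{ij}|$; $\mathrm{sgn}$ is entrywise sign. The variables range over $\tilde L_{\mathrm{new}},\tilde S\in\mathbb{R}^{n_1\times n_2}$, $\tilde X\in\mathbb{R}^{n_2\times r_G}$. *)

(* Defs.v *)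
From HB Require Import structures.
From mathcomp Require Import all_boot all_order all_algebra.
From mathcomp Require Import boolp classical_sets reals.
Set Implicit Arguments. Unset Strict Implicit. Unset Printing Implicit Defensive.
Import Order.TTheory GRing.Theory Num.Theory.
Local Open Scope ring_scope.
Local Open Scope classical_set_scope.

Section Defs.
Variable R : realType.

Definition mx_inner {m n : nat} (A B : 'M[R]_(m, n)) : R :=
  \tr (A^T *m B).

(* Frobenius norm (for column vectors this is the Euclidean norm) *)
Definition frob {m n : nat} (A : 'M[R]_(m, n)) : R :=
  Num.sqrt (\sum_(i < m) \sum_(j < n) A i j ^+ 2).

Definition spec_norm {m n : nat} (W : 'M[R]_(m, n)) : R :=
  sup [set frob (W *m x) | x in [set x : 'cV[R]_n | frob x = 1]].

Definition op_norm {m n : nat} (A : 'M[R]_(m, n) -> 'M[R]_(m, n)) : R :=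
  sup [set frob (A X) | X in [set X : 'M[R]_(m, n) | frob X = 1]].

Definition linf_norm {m n : nat} (F : 'M[R]_(m, n)) : R :=
  \big[Num.max/0]_(i < m) \big[Num.max/0]_(j < n) `|F i j|.

Definition l1_norm {m n : nat} (X : 'M[R]_(m, n)) : R :=
  \sum_(i < m) \sum_(j < n) `|X i j|.

Definition sgn_mx {m n : nat} (X : 'M[R]_(m, n)) : 'M[R]_(m, n) :=
  \matrix_(i, j) Num.sg (X i j).

Definition is_svd {m n k : nat} (A : 'M[R]_(m, n)) (U : 'M[R]_(m, k))
    (s : 'rV[R]_k) (V : 'M[R]_(n, k)) : Prop :=
  [/\ U^T *m U = 1%:M, V^T *m V = 1%:M, (forall i, 0 <= s 0 i)
    & A = U *m diag_mx s *m V^T].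

Definition nuc_norm {m n : nat} (A : 'M[R]_(m, n)) : R :=
  xget 0 [set t : R | exists k (U : 'M[R]_(m, k)) (s : 'rV[R]_k)
                             (V : 'M[R]_(n, k)),
                        is_svd A U s V /\ t = \sum_(i < k) s 0 i].

Definition proj_Omega {m n : nat} (Om : {set 'I_m * 'I_n})
    (X : 'M[R]_(m, n)) : 'M[R]_(m, n) :=
  \matrix_(i, j) (if (i, j) \in Om then X i j else 0).

Definition orth_proj {m n : nat} (Pi : set 'M[R]_(m, n))
    (X : 'M[R]_(m, n)) : 'M[R]_(m, n) :=
  xget 0 [set Y | Pi Y /\ forall Z, Pi Z -> mx_inner (X - Y) Z = 0].

Definition Pi_space {n1 n2 rG rn : nat} (G : 'M[R]_(n1, rG))
    (U : 'M[R]_(n1, rn)) (V : 'M[R]_(n2, rn)) : set 'M[R]_(n1, n2) :=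
  [set X | exists (Y1 : 'M[R]_(n2, rG + rn)) (Y2 : 'M[R]_(n1, rn)),
           X = row_mx G U *m Y1^T + Y2 *m V^T].

Definition unique_minimizer {n1 n2 rG : nat} (lam : R) (G : 'M[R]_(n1, rG))
    (M : 'M[R]_(n1, n2)) (L0 S0 : 'M[R]_(n1, n2)) (X0 : 'M[R]_(n2, rG)) : Prop :=
  let obj (Lt St : 'M[R]_(n1, n2)) := nuc_norm Lt + lam * l1_norm St in
  L0 + G *m X0^T + S0 = M /\
  forall (Lt St : 'M[R]_(n1, n2)) (Xt : 'M[R]_(n2, rG)),
    Lt + G *m Xt^T + St = M ->
    obj L0 S0 <= obj Lt St /\
    (obj Lt St = obj L0 S0 -> [/\ Lt = L0, St = S0 & Xt = X0]).

End Defs.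

(* Main.v *)
Require Import Defs.
From HB Require Import structures.
From mathcomp Require Import all_boot all_order all_algebra.
From mathcomp Require Import boolp classical_sets reals.
From mathcomp Require Import complex spectral sesquilinear.
From mathcomp Require Import ring lra.
Import Order.TTheory GRing.Theory Num.Theory.
Local Open Scope ring_scope.

Lemma ipE {R : realType} {m n} (A B : 'M[R]_(m, n)) :
  mx_inner A B = \sum_i \sum_j A i j * B i j.
Proof.
rewrite /mx_inner /mxtrace exchange_big /=; apply: eq_bigr => j _.
by rewrite !mxE; apply: eq_bigr => i _; rewrite mxE.
Qed.

Lemma ipC {R : realType} {m n} (A B : 'M[R]_(m, n)) : mx_inner A B = mx_inner B A.
Proof. by rewrite !ipE; apply: eq_bigr => i _; apply: eq_bigr => j _; rewrite mulrC. Qed.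

Lemma ipDl {R : realType} {m n} (A B C : 'M[R]_(m, n)) :
  mx_inner (A + B) C = mx_inner A C + mx_inner B C.
Proof. by rewrite /mx_inner linearD /= mulmxDl mxtraceD. Qed.

Lemma ipDr {R : realType} {m n} (A B C : 'M[R]_(m, n)) :
  mx_inner C (A + B) = mx_inner C A + mx_inner C B.
Proof. by rewrite /mx_inner mulmxDr mxtraceD. Qed.

Lemma ipZl {R : realType} {m n} (a : R) (A C : 'M[R]_(m, n)) :
  mx_inner (a *: A) C = a * mx_inner A C.
Proof. by rewrite /mx_inner linearZ /= -scalemxAl mxtraceZ. Qed.

Lemma ipZr {R : realType} {m n} (a : R) (A C : 'M[R]_(m, n)) :
  mx_inner C (a *: A) = a * mx_inner C A.
Proof. by rewrite /mx_inner -scalemxAr mxtraceZ. Qed.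

Lemma ipNl {R : realType} {m n} (A C : 'M[R]_(m, n)) :
  mx_inner (- A) C = - mx_inner A C.
Proof. by rewrite -scaleN1r ipZl mulN1r. Qed.

Lemma ipNr {R : realType} {m n} (A C : 'M[R]_(m, n)) :
  mx_inner C (- A) = - mx_inner C A.
Proof. by rewrite -scaleN1r ipZr mulN1r. Qed.

Lemma ipBl {R : realType} {m n} (A B C : 'M[R]_(m, n)) :
  mx_inner (A - B) C = mx_inner A C - mx_inner B C.
Proof. by rewrite ipDl ipNl. Qed.

Lemma ipBr {R : realType} {m n} (A B C : 'M[R]_(m, n)) :
  mx_inner C (A - B) = mx_inner C A - mx_inner C B.
Proof. by rewrite ipDr ipNr. Qed.

Lemma ip0l {R : realType} {m n} (C : 'M[R]_(m, n)) : mx_inner 0 C = 0.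
Proof. by rewrite /mx_inner trmx0 mul0mx mxtrace0. Qed.

Lemma ip0r {R : realType} {m n} (C : 'M[R]_(m, n)) : mx_inner C 0 = 0.
Proof. by rewrite ipC ip0l. Qed.

Lemma ip_mull {R : realType} {m n p} (A : 'M[R]_(m, n)) (B : 'M[R]_(n, p)) C :
  mx_inner (A *m B) C = mx_inner B (A^T *m C).
Proof. by rewrite /mx_inner trmx_mul mulmxA. Qed.

Lemma ip_mulr {R : realType} {m n p} (A : 'M[R]_(m, n)) (B : 'M[R]_(n, p)) C :
  mx_inner (A *m B) C = mx_inner A (C *m B^T).
Proof. by rewrite /mx_inner trmx_mul -mulmxA mxtrace_mulC mulmxA. Qed.

Lemma ip_tr {R : realType} {m n} (A B : 'M[R]_(m, n)) :
  mx_inner A^T B^T = mx_inner A B.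
Proof. by rewrite /mx_inner trmxK mxtrace_mulC -mxtrace_tr trmx_mul trmxK. Qed.

Lemma ipxx_ge0 {R : realType} {m n} (A : 'M[R]_(m, n)) : 0 <= mx_inner A A.
Proof. by rewrite ipE; apply: sumr_ge0 => i _; apply: sumr_ge0 => j _; rewrite -expr2 sqr_ge0. Qed.

Lemma ipxx_eq0 {R : realType} {m n} (A : 'M[R]_(m, n)) : mx_inner A A = 0 -> A = 0.
Proof.
rewrite ipE => H; apply/matrixP => i j; rewrite mxE.
have : \sum_j A i j * A i j = 0.
  apply: (psumr_eq0P _ H) => //.
  by move=> k _; apply: sumr_ge0 => l _; rewrite -expr2 sqr_ge0.
move=> /psumr_eq0P H2.
have /eqP : A i j * A i j = 0 by apply: H2 => // k _; rewrite -expr2 sqr_ge0.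
by rewrite -expr2 sqrf_eq0 => /eqP.
Qed.

Lemma frobE {R : realType} {m n} (A : 'M[R]_(m, n)) : frob A = Num.sqrt (mx_inner A A).
Proof. by rewrite /frob ipE; congr Num.sqrt; apply: eq_bigr => i _; apply: eq_bigr => j _; rewrite expr2. Qed.

Lemma frob_ge0 {R : realType} {m n} (A : 'M[R]_(m, n)) : 0 <= frob A.
Proof. by rewrite frobE sqrtr_ge0. Qed.

Lemma frob_sqr {R : realType} {m n} (A : 'M[R]_(m, n)) : frob A ^+ 2 = mx_inner A A.
Proof. by rewrite frobE sqr_sqrtr // ipxx_ge0. Qed.

Lemma frob_eq0 {R : realType} {m n} (A : 'M[R]_(m, n)) : frob A = 0 -> A = 0.
Proof. by move=> h; apply: ipxx_eq0; rewrite -frob_sqr h expr0n. Qed.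

Lemma frob0 {R : realType} {m n} : frob (0 : 'M[R]_(m, n)) = 0.
Proof. by rewrite frobE ip0l sqrtr0. Qed.

Lemma CS {R : realType} {m n} (A B : 'M[R]_(m, n)) :
  mx_inner A B <= frob A * frob B.
Proof.
set a := mx_inner A A; set b := mx_inner B B; set c := mx_inner A B.
have ha : 0 <= a := ipxx_ge0 A. have hb : 0 <= b := ipxx_ge0 B.
have key : c ^+ 2 <= a * b.
  have [a0|anz] := eqVneq a 0.
    have A0 : A = 0 by apply: ipxx_eq0.
    by rewrite /c A0 ip0l expr0n /= mulr_ge0.
  have h := ipxx_ge0 (c *: A - a *: B).
  rewrite !ipBl !ipBr !ipZl !ipZr !(ipC B A) -/a -/b -/c in h.
  have ap : 0 < a by rewrite lt_def anz ha.
  have : 0 <= a * (a * b - c ^+ 2) by nra.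
  by rewrite pmulr_rge0 // subr_ge0.
rewrite !frobE -sqrtrM //.
apply: (le_trans (real_ler_norm _)); first exact: num_real.
by rewrite -sqrtr_sqr; apply: ler_wsqrtr.
Qed.

Lemma le_sqr_ge0 {R : realType} (a b : R) : 0 <= b -> a ^+ 2 <= b ^+ 2 -> a <= b.
Proof. move=> hb h; case: (lerP a b) => // hab; nra. Qed.

Lemma frob_tr {R : realType} {m n} (A : 'M[R]_(m, n)) : frob A^T = frob A.
Proof. by rewrite !frobE ip_tr. Qed.

Lemma frobZ {R : realType} {m n} (a : R) (A : 'M[R]_(m, n)) : frob (a *: A) = `|a| * frob A.
Proof.
rewrite !frobE ipZl ipZr mulrA -expr2 sqrtrM ?sqr_ge0 //.
by rewrite sqrtr_sqr.
Qed.

Lemma frobN {R : realType} {m n} (A : 'M[R]_(m, n)) : frob (- A) = frob A.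
Proof. by rewrite -scaleN1r frobZ normrN normr1 mul1r. Qed.

Lemma pythag {R : realType} {m n} (A B : 'M[R]_(m, n)) : mx_inner A B = 0 ->
  frob (A + B) ^+ 2 = frob A ^+ 2 + frob B ^+ 2.
Proof.
move=> h; rewrite !frob_sqr ipDl !ipDr h (ipC B A) h; ring.
Qed.

Lemma frobD {R : realType} {m n} (A B : 'M[R]_(m, n)) : frob (A + B) <= frob A + frob B.
Proof.
apply: le_sqr_ge0; first by rewrite addr_ge0 ?frob_ge0.
rewrite !frob_sqr ipDl !ipDr (ipC B A) -!frob_sqr.
have := CS A B; nra.
Qed.

Lemma frobB {R : realType} {m n} (A B : 'M[R]_(m, n)) : frob (A - B) <= frob A + frob B.
Proof. by rewrite -(frobN B); apply: frobD. Qed.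

Lemma mulmx11 {R : realType} {m} (B : 'M[R]_(m, 1)) (a : 'M[R]_1) : B *m a = a 0 0 *: B.
Proof. by rewrite {1}[a]mx11_scalar mul_mx_scalar. Qed.

Lemma ip11 {R : realType} {n} (x : 'cV[R]_n) : (x^T *m x) 0 0 = mx_inner x x.
Proof. by rewrite /mx_inner /mxtrace big_ord1. Qed.

Lemma frob_mul {R : realType} {m n} (M : 'M[R]_(m, n)) (x : 'cV[R]_n) :
  frob (M *m x) <= frob M * frob x.
Proof.
set y := M *m x.
have e1 : mx_inner y y = mx_inner M (y *m x^T) by rewrite /y ip_mulr.
have e2 : frob (y *m x^T) = frob y * frob x.
  apply: le_anti; apply/andP; split.
  - apply: le_sqr_ge0; first by rewrite mulr_ge0 ?frob_ge0.
    rewrite frob_sqr ip_mulr trmxK -mulmxA mulmx11 ip11 ipZr exprMn !frob_sqr.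
    by rewrite mulrC.
  - apply: le_sqr_ge0; first by rewrite frob_ge0.
    rewrite frob_sqr ip_mulr trmxK -mulmxA mulmx11 ip11 ipZr exprMn !frob_sqr.
    by rewrite mulrC.
have h := CS M (y *m x^T); rewrite -e1 e2 -frob_sqr in h.
have [y0|ynz] := eqVneq (frob y) 0; first by rewrite y0 mulr_ge0 ?frob_ge0.
have yp : 0 < frob y by rewrite lt_def ynz frob_ge0.
have := frob_ge0 M; have := frob_ge0 x; nra.
Qed.

Lemma frob_iso {R : realType} {m n p} (U : 'M[R]_(m, n)) (y : 'M[R]_(n, p)) :
  U^T *m U = 1%:M -> frob (U *m y) = frob y.
Proof. by move=> hU; rewrite !frobE ip_mull mulmxA hU mul1mx. Qed.

Lemma proj_orth {R : realType} {m n p} (U : 'M[R]_(m, n)) (x : 'M[R]_(m, p)) :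
  U^T *m U = 1%:M -> mx_inner (U *m (U^T *m x)) ((1%:M - U *m U^T) *m x) = 0.
Proof.
move=> hU; rewrite ip_mull mulmxA mulmxBr mulmx1 mulmxA hU mul1mx subrr mul0mx.
by rewrite ip0r.
Qed.

Lemma proj_split {R : realType} {m n p} (U : 'M[R]_(m, n)) (x : 'M[R]_(m, p)) :
  x = U *m (U^T *m x) + (1%:M - U *m U^T) *m x.
Proof. by rewrite mulmxBl mul1mx mulmxA addrC subrK. Qed.

Lemma frob_proj {R : realType} {m n p} (U : 'M[R]_(m, n)) (x : 'M[R]_(m, p)) :
  U^T *m U = 1%:M ->
  frob x ^+ 2 = frob (U^T *m x) ^+ 2 + frob ((1%:M - U *m U^T) *m x) ^+ 2.
Proof.
move=> hU; rewrite {1}(proj_split U x) pythag ?proj_orth // frob_iso //.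
Qed.

Lemma frob_projT {R : realType} {m n p} (U : 'M[R]_(m, n)) (x : 'M[R]_(m, p)) :
  U^T *m U = 1%:M -> frob (U^T *m x) <= frob x.
Proof.
move=> hU; apply: le_sqr_ge0; first exact: frob_ge0.
rewrite (frob_proj U x hU); have := sqr_ge0 (frob ((1%:M - U *m U^T) *m x)); lra.
Qed.

Lemma frob_projC {R : realType} {m n p} (U : 'M[R]_(m, n)) (x : 'M[R]_(m, p)) :
  U^T *m U = 1%:M -> frob ((1%:M - U *m U^T) *m x) <= frob x.
Proof.
move=> hU; apply: le_sqr_ge0; first exact: frob_ge0.
rewrite (frob_proj U x hU); have := sqr_ge0 (frob (U^T *m x)); lra.
Qed.

Lemma trmx_projC {R : realType} {m n} (U : 'M[R]_(m, n)) :
  (1%:M - U *m U^T)^T = 1%:M - U *m U^T.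
Proof. by rewrite linearB /= trmx1 trmx_mul trmxK. Qed.

Lemma frob_projCr {R : realType} {m n p} (V : 'M[R]_(m, n)) (x : 'M[R]_(p, m)) :
  V^T *m V = 1%:M -> frob (x *m (1%:M - V *m V^T)) <= frob x.
Proof.
move=> hV; rewrite -frob_tr trmx_mul trmx_projC -(frob_tr x).
exact: frob_projC.
Qed.

Lemma zsub (V : zmodType) (x y z : V) : x - z - (x - y) = y - z.
Proof. by rewrite opprB addrC addrA subrK. Qed.

Lemma mulTmx_ip {R : realType} {m n p} (A : 'M[R]_(m, n)) (B : 'M[R]_(m, p)) i j :
  (A^T *m B) i j = mx_inner (col i A) (col j B).
Proof.
rewrite ipE !mxE; apply: eq_bigr => k _; rewrite big_ord1 !mxE.
by [].
Qed.

Lemma ip_diag {R : realType} {n} (M : 'M[R]_n) (s : 'rV[R]_n) :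
  mx_inner M (diag_mx s) = \sum_i M i i * s 0 i.
Proof.
rewrite ipE; apply: eq_bigr => i _; rewrite (bigD1 i) //= big1 ?addr0.
  by rewrite mxE eqxx mulr1n.
by move=> j /negbTE ji; rewrite mxE eq_sym ji mulr0n mulr0.
Qed.

Lemma ip_mull' {R : realType} {m n p} (A : 'M[R]_(m, n)) (B : 'M[R]_(n, p)) C :
  mx_inner C (A *m B) = mx_inner (A^T *m C) B.
Proof. by rewrite ipC ip_mull ipC. Qed.

Lemma ip_mulr' {R : realType} {m n p} (A : 'M[R]_(m, n)) (B : 'M[R]_(n, p)) C :
  mx_inner C (A *m B) = mx_inner (C *m B^T) A.
Proof. by rewrite ipC ip_mulr ipC. Qed.

Lemma col_mul {R : realType} {m n p} (A : 'M[R]_(m, n)) (B : 'M[R]_(n, p)) j :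
  col j (A *m B) = A *m col j B.
Proof.
apply/matrixP => i k; rewrite !mxE; apply: eq_bigr => l _; by rewrite !mxE.
Qed.

Lemma ip_svd_le {R : realType} {m n k} (X : 'M[R]_(m, n)) (U : 'M[R]_(m, k)) s V
  (Z : 'M[R]_(m, n)) (al : R) :
  is_svd X U s V -> (forall x : 'cV_n, frob (Z *m x) <= al * frob x) ->
  mx_inner Z X <= al * \sum_i s 0 i.
Proof.
move=> [hU hV hs ->] hZ.
rewrite ip_mulr' trmxK ip_mull' ip_diag mulr_sumr; apply: ler_sum => i _.
apply: ler_wpM2r; first exact: hs.
rewrite mulTmx_ip col_mul.
have c1 : forall (W : 'M[R]_(_, k)), W^T *m W = 1%:M -> frob (col i W) = 1.
  move=> p W hW; rewrite frobE -mulTmx_ip hW mxE eqxx mulr1n sqrtr1 //.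
apply: (le_trans (CS _ _)); rewrite (c1 _ _ hU) mul1r.
by apply: (le_trans (hZ _)); rewrite (c1 _ _ hV) mulr1.
Qed.

Lemma ip_svd_eq {R : realType} {m n k} (X : 'M[R]_(m, n)) (U : 'M[R]_(m, k)) s V :
  is_svd X U s V -> mx_inner (U *m V^T) X = \sum_i s 0 i.
Proof.
move=> [hU hV hs ->].
rewrite ip_mulr' trmxK ip_mull' ip_diag -mulmxA mulmxA hU mul1mx hV.
by apply: eq_bigr => i _; rewrite mxE eqxx mulr1n mul1r.
Qed.

Lemma UVt_contr {R : realType} {m n k} (U : 'M[R]_(m, k)) (V : 'M[R]_(n, k)) :
  U^T *m U = 1%:M -> V^T *m V = 1%:M ->
  forall x : 'cV_n, frob (U *m V^T *m x) <= 1 * frob x.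
Proof.
by move=> hU hV x; rewrite -mulmxA frob_iso // mul1r frob_projT.
Qed.

Local Open Scope classical_set_scope.
Lemma nuc_svd {R : realType} {m n} (X : 'M[R]_(m, n)) :
  (exists k (U : 'M[R]_(m, k)) (s : 'rV[R]_k) (V : 'M[R]_(n, k)), is_svd X U s V) ->
  exists k (U : 'M[R]_(m, k)) (s : 'rV[R]_k) (V : 'M[R]_(n, k)),
    is_svd X U s V /\ nuc_norm X = \sum_(i < k) s 0 i.
Proof.
move=> [k [U [s [V h]]]].
have : [set t : R | exists k (U : 'M[R]_(m, k)) (s : 'rV[R]_k)
                             (V : 'M[R]_(n, k)),
                        is_svd X U s V /\ t = \sum_(i < k) s 0 i] (nuc_norm X).
  by apply: (xgetPex 0); exists (\sum_(i < k) s 0 i); exists k, U, s, V.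
by move=> [k' [U' [s' [V' [h1 h2]]]]]; exists k', U', s', V'.
Qed.
Local Close Scope classical_set_scope.

Lemma realC (R : realType) (x : R) : (x%:C)%C \is Num.real.
Proof.
rewrite realE ler0c; case: (lerP 0 x) => //= hx.
have : (x%:C <= 0%:C)%C by rewrite lecR ltW.
by [].
Qed.

Lemma real_Re (R : realType) (z : R[i]) : z \is Num.real -> z = ((complex.Re z)%:C)%C.
Proof. by move=> /Creal_ReP h; rewrite complexRe h. Qed.

Lemma ReD (R : realType) (x y : R[i]) : complex.Re (x + y) = complex.Re x + complex.Re y.
Proof. by case: x; case: y. Qed.
Lemma ImD (R : realType) (x y : R[i]) : complex.Im (x + y) = complex.Im x + complex.Im y.
Proof. by case: x; case: y. Qed.

Lemma Re_sum (R : realType) (I : finType) (F : I -> R[i]) :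
  complex.Re (\sum_i F i) = \sum_i complex.Re (F i).
Proof. by apply: (big_morph _ (ReD R)). Qed.
Lemma Im_sum (R : realType) (I : finType) (F : I -> R[i]) :
  complex.Im (\sum_i F i) = \sum_i complex.Im (F i).
Proof. by apply: (big_morph _ (ImD R)). Qed.

Lemma eig_real (R : realType) n (S : 'M[R]_n) : S^T = S -> S != 0 ->
  exists (v : 'cV[R]_n) (mu : R), [/\ v != 0, mu != 0 & S *m v = mu *: v].
Proof.
move=> Ssym Snz.
pose Sc := map_mx (fun x : R => (x%:C)%C) S.
have Sh : Sc \is hermsymmx.
  apply: realsym_hermsym.
    apply/is_hermitianmxP; rewrite expr0 scale1r.
    by apply/matrixP => i j; rewrite !mxE -[in LHS]Ssym mxE.
  by apply/mxOverP => i j; rewrite mxE realC.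
have /orthomx_spectralP Seq := hermitian_normalmx Sh.
set P := spectralmx Sc in Seq; set d := spectral_diag Sc in Seq.
have Pu : P \in unitmx by apply: spectral_unit.
have dreal := hermitian_spectral_diag_real Sh; rewrite -/d in dreal.
have [i di] : exists i, d 0 i != 0.
  apply/existsP; apply: contraR Snz; rewrite negb_exists => /forallP H.
  have d0 : diag_mx d = 0.
    by apply/matrixP => k l; rewrite !mxE; move: (H k); rewrite negbK => /eqP ->; rewrite mul0rn.
  apply/eqP/matrixP => k l; have /matrixP/(_ k l) := Seq.
  by rewrite d0 mulmx0 mul0mx !mxE => -[].
have PS : P *m Sc = diag_mx d *m P by rewrite Seq !mulmxA mulmxV // mul1mx.
set w := row i P.
have wS : w *m Sc = d 0 i *: w.
  by rewrite /w -row_mul PS row_mul row_diag_mx -scalemxAl -rowE.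
have wnz : w != 0.
  apply/eqP => w0; have := row_mul i P (invmx P); rewrite mulmxV // -/w w0 mul0mx.
  move=> /rowP /(_ i); rewrite !mxE eqxx /= => /eqP; by rewrite oner_eq0.
have /mxOverP /(_ 0 i) dir := dreal.
set a := complex.Re (d 0 i).
have da : d 0 i = (a%:C)%C by apply: real_Re.
have anz : a != 0 by apply: contra di; rewrite da => /eqP ->.
pose p := map_mx (@complex.Re R) w; pose q := map_mx (@complex.Im R) w.
have pS : p *m S = a *: p.
  apply/rowP => j; have /rowP /(_ j) := wS; rewrite !mxE => /(congr1 (@complex.Re R)).
  rewrite Re_sum => H.
  transitivity (\sum_k complex.Re (w 0 k * Sc k j)).
    by apply: eq_bigr => k _; rewrite !mxE; case: (P i k) => x y /=; ring.
  by rewrite H da; case: (P i j) => x y /=; ring.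
have qS : q *m S = a *: q.
  apply/rowP => j; have /rowP /(_ j) := wS; rewrite !mxE => /(congr1 (@complex.Im R)).
  rewrite Im_sum => H.
  transitivity (\sum_k complex.Im (w 0 k * Sc k j)).
    by apply: eq_bigr => k _; rewrite !mxE; case: (P i k) => x y /=; ring.
  by rewrite H da; case: (P i j) => x y /=; ring.
have [pz|pnz] := eqVneq p 0.
  have qnz : q != 0.
    apply: contra wnz => /eqP q0; apply/eqP/rowP => j.
    have /rowP /(_ j) := pz; have /rowP /(_ j) := q0; rewrite !mxE.
    by case: (P i j) => x y /= -> ->.
  exists q^T, a; split => //; first by rewrite trmx_eq0.
  by rewrite -{1}Ssym -trmx_mul qS linearZ.
exists p^T, a; split => //; first by rewrite trmx_eq0.
by rewrite -{1}Ssym -trmx_mul pS linearZ.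
Qed.

Lemma mx11_eq {R : realType} (a b : 'M[R]_1) : a 0 0 = b 0 0 -> a = b.
Proof. by move=> h; apply/matrixP => i j; rewrite !ord1. Qed.

Lemma unitv {R : realType} {n} (v : 'cV[R]_n) : frob v = 1 -> v^T *m v = 1%:M.
Proof.
move=> h; apply: mx11_eq; rewrite ip11 -frob_sqr h expr1n mxE eqxx //.
Qed.

Lemma diag_pos_cancel {R : realType} {m k} {M : 'M[R]_(m, k)} {s : 'rV[R]_k} :
  (forall i, 0 < s 0 i) -> M *m diag_mx s = 0 -> M = 0.
Proof.
move=> hs /matrixP h; apply/matrixP => i j; have := h i j.
rewrite mul_mx_diag !mxE => /eqP; rewrite mulf_eq0 => /orP[/eqP //|/eqP sj].
by have := hs j; rewrite sj ltxx.
Qed.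

Lemma svd_pos {R : realType} {m n} (A : 'M[R]_(m, n)) :
  exists k (U : 'M[R]_(m, k)) (s : 'rV[R]_k) (V : 'M[R]_(n, k)),
  [/\ U^T *m U = 1%:M, V^T *m V = 1%:M, (forall i, 0 < s 0 i) &
      A = U *m diag_mx s *m V^T].
Proof.
have [r] := ubnP (\rank A); elim: r A => // r IH A.
rewrite ltnS => hr.
have [->|Anz] := eqVneq A 0.
  exists 0, 0, 0, 0; split.
  - by rewrite [LHS]thinmx0 [RHS]thinmx0.
  - by rewrite [LHS]thinmx0 [RHS]thinmx0.
  - by case.
  - by rewrite mul0mx mul0mx.
set S := A^T *m A.
have Ssym : S^T = S by rewrite /S trmx_mul trmxK.
have Snz : S != 0.
  apply: contra Anz => /eqP S0; apply/eqP/ipxx_eq0.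
  by rewrite /mx_inner -/S S0 mxtrace0.
have [v0 [mu [v0nz munz Sv0]]] := @eig_real R n S Ssym Snz.
have fv0 : 0 < frob v0.
  rewrite lt_def frob_ge0 andbT; apply: contra v0nz => /eqP h.
  by apply/eqP/frob_eq0.
set v := (frob v0)^-1 *: v0.
have fv : frob v = 1.
  by rewrite /v frobZ ger0_norm ?invr_ge0 ?ltW // mulVf // gt_eqF.
have vtv : v^T *m v = 1%:M by apply: unitv.
have Sv : S *m v = mu *: v by rewrite /v -scalemxAr Sv0 !scalerA mulrC.
have muE : mx_inner (A *m v) (A *m v) = mu.
  rewrite ip_mull mulmxA -/S Sv ipZr -frob_sqr fv expr1n mulr1 //.
set sg := frob (A *m v).
have sgE : sg ^+ 2 = mu by rewrite /sg frob_sqr.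
have sgp : 0 < sg.
  rewrite lt_def frob_ge0 andbT; apply/eqP => h.
  by move: munz; rewrite -sgE -/sg h expr0n eqxx.
set u := sg^-1 *: (A *m v).
have fu : frob u = 1.
  by rewrite /u frobZ ger0_norm ?invr_ge0 ?ltW // mulVf // gt_eqF.
have utu : u^T *m u = 1%:M by apply: unitv.
set A' := A - A *m v *m v^T.
have uA : u^T *m A = (sg^-1 * mu) *: v^T.
  rewrite /u linearZ /= -scalemxAl trmx_mul.
  have -> : v^T *m A^T *m A = (S *m v)^T by rewrite trmx_mul Ssym -mulmxA.
  by rewrite Sv linearZ /= scalerA.
have uA' : u^T *m A' = 0.
  rewrite /A' mulmxBr uA !mulmxA uA -!scalemxAl vtv.
  by rewrite mul1mx subrr.
have A'v : A' *m v = 0 by rewrite /A' mulmxBl -!mulmxA vtv mulmx1 subrr.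
have AE : A = A' + sg *: u *m v^T.
  by rewrite /A' /u scalerA mulfV ?gt_eqF // scale1r subrK.
have hr' : (\rank A' < r)%N.
  apply: leq_trans hr; rewrite -mxrank_tr -(mxrank_tr A).
  apply: rank_ltmx; rewrite ltmxE; apply/andP; split.
    have -> : A'^T = (1%:M - v *m v^T) *m A^T.
      by rewrite /A' -{1}(mulmx1 A) -mulmxA -mulmxBr trmx_mul trmx_projC.
    exact: submxMl.
  apply/negP => hsub.
  have hu : (u^T <= A'^T)%MS.
    apply: submx_trans hsub.
    have -> : u^T = (sg^-1 *: v^T) *m A^T by rewrite /u linearZ /= trmx_mul scalemxAl.
    exact: submxMl.
  have [w hw] := submxP hu.
  have : u^T *m u = 0 by rewrite hw -mulmxA -(trmxK u) -trmx_mul uA' trmx0 mulmx0.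
  rewrite utu => /matrixP /(_ 0 0); rewrite !mxE eqxx /= => /eqP; by rewrite oner_eq0.
have [k' [U' [s' [V' [hU' hV' hs' A'E]]]]] := IH A' hr'.
have uU' : u^T *m U' = 0.
  apply: (diag_pos_cancel hs'); rewrite -mulmxA.
  have -> : U' *m diag_mx s' = A' *m V' by rewrite A'E -mulmxA -(mulmxA U') hV' mulmx1.
  by rewrite mulmxA uA' mul0mx.
have vV' : v^T *m V' = 0.
  apply: (diag_pos_cancel hs'); rewrite -mulmxA.
  have -> : V' *m diag_mx s' = A'^T *m U'.
    rewrite A'E !trmx_mul trmxK -!mulmxA hU' mulmx1 tr_diag_mx //.
  by rewrite mulmxA -trmx_mul A'v trmx0 mul0mx.
exists (1 + k')%N, (row_mx u U'), (row_mx (const_mx sg) s'), (row_mx v V'); split.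
- rewrite tr_row_mx mul_col_row utu uU' hU'.
  have -> : U'^T *m u = 0 by rewrite -(trmxK (U'^T *m u)) trmx_mul trmxK uU' trmx0.
  by rewrite -scalar_mx_block.
- rewrite tr_row_mx mul_col_row vtv vV' hV'.
  have -> : V'^T *m v = 0 by rewrite -(trmxK (V'^T *m v)) trmx_mul trmxK vV' trmx0.
  by rewrite -scalar_mx_block.
- move=> i; rewrite -(splitK i); case: (split i) => j /=.
    by rewrite row_mxEl mxE.
  by rewrite row_mxEr.
- rewrite diag_mx_row mul_row_block !mulmx0 addr0 add0r tr_row_mx mul_row_col.
  have -> : diag_mx (const_mx sg : 'rV[R]_1) = sg%:M.
    by apply: mx11_eq; rewrite !mxE eqxx.
  by rewrite mul_mx_scalar -A'E addrC -scalemxAl AE scalemxAl.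
Qed.

Lemma svd_ex {R : realType} {m n} (X : 'M[R]_(m, n)) :
  exists k (U : 'M[R]_(m, k)) (s : 'rV[R]_k) (V : 'M[R]_(n, k)), is_svd X U s V.
Proof.
have [k [U [s [V [h1 h2 h3 h4]]]]] := svd_pos X.
by exists k, U, s, V; split => // i; apply: ltW.
Qed.

Lemma nuc_dual {R : realType} {m n} (X Z : 'M[R]_(m, n)) (al : R) :
  (forall x : 'cV_n, frob (Z *m x) <= al * frob x) -> mx_inner Z X <= al * nuc_norm X.
Proof.
move=> hZ; have [k [U [s [V [h ->]]]]] := nuc_svd _ (svd_ex X).
exact: (ip_svd_le _ _ _ _ _ _ h hZ).
Qed.

Lemma nuc_eq {R : realType} {m n k} (X : 'M[R]_(m, n)) (U : 'M[R]_(m, k)) s V :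
  is_svd X U s V -> nuc_norm X = \sum_i s 0 i.
Proof.
move=> h; have [k' [U' [s' [V' [h' ->]]]]] := nuc_svd _ (svd_ex X).
apply: le_anti; apply/andP; split.
- rewrite -(ip_svd_eq _ _ _ _ h') -[X in _ <= X]mul1r; apply: (ip_svd_le _ _ _ _ _ _ h).
  by case: h' => hU hV _ _; apply: UVt_contr.
- rewrite -(ip_svd_eq _ _ _ _ h) -[X in _ <= X]mul1r; apply: (ip_svd_le _ _ _ _ _ _ h').
  by case: h => hU hV _ _; apply: UVt_contr.
Qed.

Lemma nuc_ge0 {R : realType} {m n} (X : 'M[R]_(m, n)) : 0 <= nuc_norm X.
Proof.
have [k [U [s [V [h ->]]]]] := nuc_svd _ (svd_ex X).
by apply: sumr_ge0 => i _; case: h => _ _ hs _; apply: hs.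
Qed.

Lemma frob_le_nuc {R : realType} {m n} (X : 'M[R]_(m, n)) : frob X <= nuc_norm X.
Proof.
have [X0|Xnz] := eqVneq (frob X) 0; first by rewrite X0 nuc_ge0.
have fp : 0 < frob X by rewrite lt_def Xnz frob_ge0.
have := @nuc_dual _ _ _ X ((frob X)^-1 *: X) 1.
rewrite ipZl -frob_sqr mul1r expr2 mulrA mulVf // mul1r; apply => x.
rewrite -scalemxAl frobZ ger0_norm; last by rewrite invr_ge0 ltW.
rewrite mul1r ler_pdivrMl //; exact: frob_mul.
Qed.

Local Open Scope classical_set_scope.

Lemma spec_bound {R : realType} {m n} (W : 'M[R]_(m, n)) (c : R) :
  spec_norm W <= c -> forall x : 'cV_n, frob (W *m x) <= c * frob x.
Proof.
move=> hc x.
have [x0|xnz] := eqVneq (frob x) 0.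
  by rewrite (frob_eq0 x x0) mulmx0 !frob0 mulr0.
have fp : 0 < frob x by rewrite lt_def xnz frob_ge0.
set y := (frob x)^-1 *: x.
have fy : frob y = 1 by rewrite /y frobZ ger0_norm ?invr_ge0 ?ltW // mulVf.
have hub : has_ubound [set frob (W *m x) | x in [set x : 'cV[R]_n | frob x = 1]].
  exists (frob W) => _ [z hz <-]; rewrite -[X in _ <= X]mulr1 -[X in _ * X]hz.
  exact: frob_mul.
have h : frob (W *m y) <= spec_norm W by apply: (ub_le_sup hub); exists y.
have : frob (W *m y) <= c := le_trans h hc.
rewrite /y -scalemxAr frobZ ger0_norm; last by rewrite invr_ge0 ltW.
by rewrite mulrC -ler_pdivlMr ?invr_gt0 // invrK.
Qed.

Lemma op_bound {R : realType} {m n} (A : 'M[R]_(m, n) -> 'M[R]_(m, n)) (B c : R) :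
  (forall a X, A (a *: X) = a *: A X) ->
  (forall X, frob (A X) <= B * frob X) ->
  op_norm A <= c -> forall X, frob (A X) <= c * frob X.
Proof.
move=> hlin hB hc x.
have [x0|xnz] := eqVneq (frob x) 0.
  have -> : x = 0 by apply: frob_eq0.
  have := hB (0 : 'M[R]_(m, n)); rewrite frob0 mulr0 => h0.
  by rewrite mulr0.
have fp : 0 < frob x by rewrite lt_def xnz frob_ge0.
set y := (frob x)^-1 *: x.
have fy : frob y = 1 by rewrite /y frobZ ger0_norm ?invr_ge0 ?ltW // mulVf.
have hub : has_ubound [set frob (A X) | X in [set X : 'M[R]_(m, n) | frob X = 1]].
  exists B => _ [z hz <-]; rewrite -[X in _ <= X]mulr1 -[X in _ * X]hz.
  exact: hB.
have h : frob (A y) <= op_norm A by apply: (ub_le_sup hub); exists y.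
have : frob (A y) <= c := le_trans h hc.
rewrite /y hlin frobZ ger0_norm; last by rewrite invr_ge0 ltW.
by rewrite mulrC -ler_pdivlMr ?invr_gt0 // invrK.
Qed.
Local Close Scope classical_set_scope.

Definition PPi {R : realType} {n1 n2 rG rn} (G : 'M[R]_(n1, rG)) (U : 'M[R]_(n1, rn))
  (V : 'M[R]_(n2, rn)) (X : 'M[R]_(n1, n2)) : 'M[R]_(n1, n2) :=
  X - (1%:M - row_mx G U *m (row_mx G U)^T) *m X *m (1%:M - V *m V^T).

Lemma Pi_add {R : realType} {n1 n2 rG rn} (G : 'M[R]_(n1, rG)) (U : 'M[R]_(n1, rn))
  (V : 'M[R]_(n2, rn)) X Y :
  Pi_space G U V X -> Pi_space G U V Y -> Pi_space G U V (X + Y).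
Proof.
move=> [A1 [A2 ->]] [B1 [B2 ->]]; exists (A1 + B1), (A2 + B2).
rewrite linearD /= mulmxDr mulmxDl !addrA; congr (_ + _).
by rewrite -!addrA; congr (_ + _); rewrite addrC.
Qed.

Lemma Pi_opp {R : realType} {n1 n2 rG rn} (G : 'M[R]_(n1, rG)) (U : 'M[R]_(n1, rn))
  (V : 'M[R]_(n2, rn)) X :
  Pi_space G U V X -> Pi_space G U V (- X).
Proof.
move=> [A1 [A2 ->]]; exists (- A1), (- A2).
by rewrite opprD linearN /= mulmxN mulNmx.
Qed.

Lemma Pi_E {R : realType} {n1 n2 rG rn} (G : 'M[R]_(n1, rG)) (U : 'M[R]_(n1, rn))
  (V : 'M[R]_(n2, rn)) (Y : 'M[R]_(rG + rn, n2)) :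
  Pi_space G U V (row_mx G U *m Y).
Proof. by exists Y^T, 0; rewrite trmxK mul0mx addr0. Qed.

Lemma Pi_V {R : realType} {n1 n2 rG rn} (G : 'M[R]_(n1, rG)) (U : 'M[R]_(n1, rn))
  (V : 'M[R]_(n2, rn)) (Y : 'M[R]_(n1, rn)) :
  Pi_space G U V (Y *m V^T).
Proof. by exists 0, Y; rewrite trmx0 mulmx0 add0r. Qed.

Lemma PPiE {R : realType} {n1 n2 rG rn} (G : 'M[R]_(n1, rG)) (U : 'M[R]_(n1, rn))
  (V : 'M[R]_(n2, rn)) X :
  PPi G U V X = row_mx G U *m ((row_mx G U)^T *m X)
     + ((1%:M - row_mx G U *m (row_mx G U)^T) *m X *m V) *m V^T.
Proof.
rewrite /PPi; set P := row_mx G U *m (row_mx G U)^T.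
rewrite mulmxBr mulmx1 opprB -mulmxA mulmxA mulmxBl mul1mx.
rewrite addrCA.
have -> : X - (X - P *m X) = P *m X by rewrite opprB addrC subrK.
by rewrite addrC !mulmxA.
Qed.

Lemma PPi_mem {R : realType} {n1 n2 rG rn} (G : 'M[R]_(n1, rG)) (U : 'M[R]_(n1, rn))
  (V : 'M[R]_(n2, rn)) X : Pi_space G U V (PPi G U V X).
Proof. by rewrite PPiE; apply: Pi_add; [apply: Pi_E | apply: Pi_V]. Qed.

Lemma EtE {R : realType} {n1 rG rn} (G : 'M[R]_(n1, rG)) (U : 'M[R]_(n1, rn)) :
  G^T *m G = 1%:M -> U^T *m U = 1%:M -> G^T *m U = 0 ->
  (row_mx G U)^T *m row_mx G U = 1%:M.
Proof.
move=> hG hU hGU; rewrite tr_row_mx mul_col_row hG hU hGU.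
have -> : U^T *m G = 0 by rewrite -(trmxK (U^T *m G)) trmx_mul trmxK hGU trmx0.
by rewrite -scalar_mx_block.
Qed.

Lemma PPi_orth {R : realType} {n1 n2 rG rn} (G : 'M[R]_(n1, rG)) (U : 'M[R]_(n1, rn))
  (V : 'M[R]_(n2, rn)) X :
  (row_mx G U)^T *m row_mx G U = 1%:M -> V^T *m V = 1%:M ->
  forall Z, Pi_space G U V Z -> mx_inner (X - PPi G U V X) Z = 0.
Proof.
move=> hE hV Z [Y1 [Y2 ->]]; rewrite /PPi opprB addrC subrK.
set E := row_mx G U in hE *.
rewrite ipDr ip_mull' ip_mulr' trmxK.
have -> : E^T *m ((1%:M - E *m E^T) *m X *m (1%:M - V *m V^T)) = 0.
  have hE0 : E^T *m (1%:M - E *m E^T) = 0.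
    by rewrite mulmxBr mulmx1 mulmxA hE mul1mx subrr.
  by rewrite !mulmxA hE0 !mul0mx.
have -> : (1%:M - E *m E^T) *m X *m (1%:M - V *m V^T) *m V = 0.
  have hV0 : (1%:M - V *m V^T) *m V = 0.
    by rewrite mulmxBl mul1mx -mulmxA hV mulmx1 subrr.
  by rewrite -mulmxA hV0 mulmx0.
by rewrite !ip0l addr0.
Qed.

Local Open Scope classical_set_scope.
Lemma orth_projE {R : realType} {n1 n2 rG rn} (G : 'M[R]_(n1, rG)) (U : 'M[R]_(n1, rn))
  (V : 'M[R]_(n2, rn)) X :
  (row_mx G U)^T *m row_mx G U = 1%:M -> V^T *m V = 1%:M ->
  orth_proj (Pi_space G U V) X = PPi G U V X.
Proof.
move=> hE hV; apply: xget_unique.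
  by split; [apply: PPi_mem | apply: PPi_orth].
move=> y [hy hy2]; apply/eqP; rewrite -subr_eq0; apply/eqP.
set d := y - PPi G U V X.
have hd : Pi_space G U V d by apply: Pi_add => //; apply: Pi_opp; apply: PPi_mem.
apply: ipxx_eq0.
have -> : mx_inner d d = mx_inner (X - PPi G U V X) d - mx_inner (X - y) d.
  by rewrite -ipBl zsub.
by rewrite hy2 // PPi_orth // subrr.
Qed.
Local Close Scope classical_set_scope.

Lemma POE {R : realType} {m n} (Om : {set 'I_m * 'I_n}) (X : 'M[R]_(m, n)) i j :
  proj_Omega Om X i j = if (i, j) \in Om then X i j else 0.
Proof. by rewrite mxE. Qed.

Lemma POZ {R : realType} {m n} (Om : {set 'I_m * 'I_n}) a (X : 'M[R]_(m, n)) :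
  proj_Omega Om (a *: X) = a *: proj_Omega Om X.
Proof. by apply/matrixP => i j; rewrite !mxE; case: ifP; rewrite ?mulr0. Qed.

Lemma POD {R : realType} {m n} (Om : {set 'I_m * 'I_n}) (X Y : 'M[R]_(m, n)) :
  proj_Omega Om (X + Y) = proj_Omega Om X + proj_Omega Om Y.
Proof. by apply/matrixP => i j; rewrite !mxE; case: ifP; rewrite ?addr0. Qed.

Lemma PO_le {R : realType} {m n} (Om : {set 'I_m * 'I_n}) (X : 'M[R]_(m, n)) :
  frob (proj_Omega Om X) <= frob X.
Proof.
rewrite /frob; apply: ler_wsqrtr; apply: ler_sum => i _; apply: ler_sum => j _.
by rewrite mxE; case: ifP => _ //; rewrite expr0n /= sqr_ge0.
Qed.

Lemma POc_le {R : realType} {m n} (Om : {set 'I_m * 'I_n}) (X : 'M[R]_(m, n)) :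
  frob (X - proj_Omega Om X) <= frob X.
Proof.
rewrite /frob; apply: ler_wsqrtr; apply: ler_sum => i _; apply: ler_sum => j _.
by rewrite !mxE; case: ifP => _; rewrite ?subrr ?subr0 ?expr0n /= ?sqr_ge0.
Qed.

Lemma ip_PO {R : realType} {m n} (Om : {set 'I_m * 'I_n}) (X Y : 'M[R]_(m, n)) :
  mx_inner (proj_Omega Om X) Y = mx_inner (proj_Omega Om X) (proj_Omega Om Y).
Proof.
rewrite !ipE; apply: eq_bigr => i _; apply: eq_bigr => j _.
by rewrite !mxE; case: ifP; rewrite ?mul0r.
Qed.

Lemma sumsq_le {R : realType} (I : finType) (x : I -> R) :
  (forall i, 0 <= x i) -> \sum_i x i ^+ 2 <= (\sum_i x i) ^+ 2.
Proof.
move=> hx; rewrite expr2 mulr_sumr; apply: ler_sum => i _.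
rewrite expr2 mulrC; apply: ler_wpM2r => //.
by rewrite (bigD1 i) //= lerDl sumr_ge0.
Qed.

Lemma frob_le_l1 {R : realType} {m n} (X : 'M[R]_(m, n)) : frob X <= l1_norm X.
Proof.
have h0 : 0 <= l1_norm X by apply: sumr_ge0 => i _; apply: sumr_ge0.
rewrite /frob -(ger0_norm h0) -sqrtr_sqr; apply: ler_wsqrtr.
rewrite /l1_norm.
apply: (@le_trans _ _ (\sum_i (\sum_j `|X i j|) ^+ 2)); last first.
  by apply: sumsq_le => i; apply: sumr_ge0.
apply: ler_sum => i _; apply: (@le_trans _ _ (\sum_j `|X i j| ^+ 2)); last first.
  by apply: sumsq_le.
by apply: ler_sum => j _; rewrite -normrX ger0_norm ?sqr_ge0.
Qed.

Lemma linf_le {R : realType} {m n} (F : 'M[R]_(m, n)) i j : `|F i j| <= linf_norm F.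
Proof.
rewrite /linf_norm; apply: le_trans (le_bigmax _ _ i).
exact: (le_bigmax _ (fun j => `|F i j|) j).
Qed.

Lemma entry_ineq {R : realType} (s k f d : R) (inO : bool) :
  (s != 0 <-> inO) -> (inO -> f = 0) -> `|f| <= 9 / 10 ->
  `|s| + (Num.sg s + f + (if inO then d else 0)) * k
    + 1 / 10 * `|k - (if inO then k else 0)| - (if inO then d else 0) * k
  <= `|s + k|.
Proof.
move=> hs hf hfn; case: inO hs hf => hs hf.
- rewrite hf // subrr normr0 mulr0 addr0 addr0.
  have hn1 := ler_norm (s + k); have hn2 := ler_norm (- (s + k)); rewrite normrN in hn2.
  case: (ltrgtP s 0) => hs0.
  + rewrite ltr0_sg // ltr0_norm //; lra.
  + rewrite gtr0_sg // gtr0_norm //; lra.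
  + rewrite hs0 sgr0 normr0; lra.
- have s0 : s = 0 by case: (eqVneq s 0) => // /(proj1 hs).
  rewrite s0 sgr0 normr0 add0r addr0 !add0r mul0r !subr0.
  have : f * k <= `|f| * `|k| by rewrite -normrM ler_norm.
  have := normr_ge0 k; nra.
Qed.

Lemma l1_ineq {R : realType} {m n} (Om : {set 'I_m * 'I_n}) (S K F D : 'M[R]_(m, n)) :
  (forall i j, S i j != 0 <-> (i, j) \in Om) -> proj_Omega Om F = 0 ->
  linf_norm F <= 9 / 10 ->
  l1_norm S + mx_inner (sgn_mx S + F + proj_Omega Om D) K
   + 1 / 10 * l1_norm (K - proj_Omega Om K) - mx_inner (proj_Omega Om D) K
  <= l1_norm (S + K).
Proof.
move=> hS hF hFn; rewrite /l1_norm !ipE !mulr_sumr -!big_split -sumrB /=.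
apply: ler_sum => i _; rewrite !mulr_sumr -!big_split -sumrB /=.
apply: ler_sum => j _; rewrite !mxE.
apply: entry_ineq; first exact: hS.
  by move=> h; have /matrixP /(_ i j) := hF; rewrite !mxE h.
exact: le_trans (linf_le F i j) hFn.
Qed.

Lemma zdiff3 (T : zmodType) (a a' b b' c c' : T) :
  (a - a') + (b - b') + (c - c') = (a + b + c) - (a' + b' + c').
Proof. by rewrite !opprD [a - a' + _]addrACA [LHS]addrACA. Qed.

Lemma PPiZ {R : realType} {n1 n2 rG rn} (G : 'M[R]_(n1, rG)) (U : 'M[R]_(n1, rn))
  (V : 'M[R]_(n2, rn)) a X : PPi G U V (a *: X) = a *: PPi G U V X.
Proof. by rewrite /PPi -scalemxAr -scalemxAl scalerBr. Qed.

Lemma PPi_le {R : realType} {n1 n2 rG rn} (G : 'M[R]_(n1, rG)) (U : 'M[R]_(n1, rn))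
  (V : 'M[R]_(n2, rn)) X :
  (row_mx G U)^T *m row_mx G U = 1%:M -> V^T *m V = 1%:M ->
  frob (PPi G U V X) <= frob X.
Proof.
move=> hE hV; apply: le_sqr_ge0; first exact: frob_ge0.
have := pythag (PPi G U V X) (X - PPi G U V X).
rewrite ipC (PPi_orth G U V X hE hV _ (PPi_mem G U V X)) => /(_ erefl).
rewrite addrC subrK => ->; have := sqr_ge0 (frob (X - PPi G U V X)); lra.
Qed.

Lemma EG {R : realType} {n1 rG rn} (G : 'M[R]_(n1, rG)) (U : 'M[R]_(n1, rn)) :
  G^T *m G = 1%:M -> U^T *m G = 0 ->
  (1%:M - row_mx G U *m (row_mx G U)^T) *m G = 0.
Proof.
move=> hG hUG; rewrite mulmxBl mul1mx -mulmxA tr_row_mx.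
rewrite (_ : col_mx G^T U^T *m G = col_mx 1%:M 0); last first.
  by apply/esym; rewrite mul_col_mx hG hUG.
by rewrite mul_row_col mulmx1 mulmx0 addr0 subrr.
Qed.

Lemma EU {R : realType} {n1 rG rn} (G : 'M[R]_(n1, rG)) (U : 'M[R]_(n1, rn)) :
  U^T *m U = 1%:M -> G^T *m U = 0 ->
  (1%:M - row_mx G U *m (row_mx G U)^T) *m U = 0.
Proof.
move=> hU hGU; rewrite mulmxBl mul1mx -mulmxA tr_row_mx.
rewrite (_ : col_mx G^T U^T *m U = col_mx 0 1%:M); last first.
  by apply/esym; rewrite mul_col_mx hU hGU.
by rewrite mul_row_col mulmx1 mulmx0 add0r subrr.
Qed.

Lemma sq_le {R : realType} (a b : R) : 0 <= a -> a <= b -> a ^+ 2 <= b ^+ 2.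
Proof. move=> ha hab; nra. Qed.

Theorem lemma3 (R : realType) (n1 n2 rG r rn : nat)
  (L S : 'M[R]_(n1, n2)) (Om : {set 'I_n1 * 'I_n2})
  (G : 'M[R]_(n1, rG)) (U : 'M[R]_(n1, rn)) (sigma : 'rV[R]_rn)
  (V : 'M[R]_(n2, rn)) (lam : R) (W F D : 'M[R]_(n1, n2)) :
  \rank L = r ->
  (forall i j, S i j != 0 <-> (i, j) \in Om) ->
  G^T *m G = 1%:M ->
  \rank ((1%:M - G *m G^T) *m L) = rn ->
  (rn < r)%N ->
  U^T *m U = 1%:M -> V^T *m V = 1%:M -> (forall i, 0 < sigma 0 i) ->
  (1%:M - G *m G^T) *m L = U *m diag_mx sigma *m V^T ->
  op_norm (fun X => proj_Omega Om (orth_proj (Pi_space G U V) X)) <= 1 / 4 ->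
  0 < lam -> lam < 3 / 10 ->
  U *m V^T + W = lam *: (sgn_mx S + F + proj_Omega Om D) ->
  orth_proj (Pi_space G U V) W = 0 ->
  spec_norm W <= 9 / 10 ->
  proj_Omega Om F = 0 ->
  linf_norm F <= 9 / 10 ->
  frob (proj_Omega Om D) <= 1 / 4 ->
  unique_minimizer lam G (L + S) ((1%:M - G *m G^T) *m L) S (L^T *m G).
Proof.
move=> _ hS hG _ _ hU hV hsig hL0 hop hlam0 hlam1 hcert hW hWn hF hFn hD.
set L0 := (1%:M - G *m G^T) *m L in hL0 *.
set X0 := L^T *m G.
set E := row_mx G U.
set Y0 := sgn_mx S + F + proj_Omega Om D in hcert.
set sig := \sum_i sigma 0 i.
have hGU : G^T *m U = 0.
  have hGL0 : G^T *m L0 = 0.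
    by rewrite /L0 mulmxA mulmxBr mulmx1 mulmxA hG mul1mx subrr mul0mx.
  apply: (diag_pos_cancel hsig).
  have : G^T *m L0 *m V = 0 by rewrite hGL0 mul0mx.
  by rewrite hL0 !mulmxA -(mulmxA _ _ V) hV mulmx1.
have hUG : U^T *m G = 0 by rewrite -(trmxK (U^T *m G)) trmx_mul trmxK hGU trmx0.
have hE : E^T *m E = 1%:M by apply: EtE.
have hWorth : forall Z, Pi_space G U V Z -> mx_inner W Z = 0.
  move=> Z hZ; have := PPi_orth G U V W hE hV Z hZ.
  by rewrite -orth_projE // hW subr0.
have hGW : G^T *m W = 0.
  apply: ipxx_eq0; rewrite -ip_mull'.
  have -> : G *m (G^T *m W) = E *m col_mx (G^T *m W) 0.
    by rewrite mul_row_col mulmx0 addr0.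
  by apply: hWorth; apply: Pi_E.
have hWsp := spec_bound _ _ hWn.
have hop' : forall X, frob (proj_Omega Om (PPi G U V X)) <= 1 / 4 * frob X.
  move=> X; rewrite -orth_projE //.
  apply: (op_bound _ 1 (1 / 4)) hop X => [a Y|Y].
    by rewrite !orth_projE // PPiZ POZ.
  by rewrite orth_projE // mul1r; apply: le_trans (PO_le _ _) (PPi_le _ _ _ _ hE hV).
have svdL0 : is_svd L0 U sigma V by split => // i; apply: ltW.
have nucL0 : nuc_norm L0 = sig := nuc_eq _ _ _ _ svdL0.
have base : L0 + G *m X0^T + S = L + S.
  by rewrite /X0 trmx_mul trmxK /L0 mulmxBl mul1mx mulmxA subrK.
split => // Lt St Xt hc.
set H := Lt - L0; set K := St - S; set Dl := Xt - X0.
have hHK : H + G *m Dl^T + K = 0.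
  by rewrite /H /K /Dl linearB /= mulmxBr zdiff3 hc base subrr.
have LtE : Lt = L0 + H by rewrite /H addrC subrK.
have StE : St = S + K by rewrite /K addrC subrK.
have KE : K = - (H + G *m Dl^T) by apply: (addrI (H + G *m Dl^T)); rewrite hHK addrN.
set P1 := 1%:M - U *m U^T; set P2 := 1%:M - V *m V^T.
set X := P1 *m H *m P2.
have [k' [U' [s' [V' [svdX nucX]]]]] := nuc_svd _ (svd_ex X).
set n := nuc_norm X in nucX *.
have n0 : 0 <= n by apply: nuc_ge0.
have fXn : frob X <= n by apply: frob_le_nuc.
have hP1U : P1 *m U = 0 by rewrite /P1 mulmxBl mul1mx -mulmxA hU mulmx1 subrr.
have hUP1 : U^T *m P1 = 0 by rewrite /P1 mulmxBr mulmx1 mulmxA hU mul1mx subrr.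
have hP2V : P2 *m V = 0 by rewrite /P2 mulmxBl mul1mx -mulmxA hV mulmx1 subrr.
have hVP2 : V^T *m P2 = 0 by rewrite /P2 mulmxBr mulmx1 mulmxA hV mul1mx subrr.
have P1T : P1^T = P1 by rewrite /P1 trmx_projC.
have P2T : P2^T = P2 by rewrite /P2 trmx_projC.
case: (svdX) => hU' hV' hs' Xsvd.
set Z := U *m V^T + P1 *m (U' *m V'^T) *m P2.
have hZ : forall x : 'cV_n2, frob (Z *m x) <= 1 * frob x.
  move=> x; rewrite mul1r; apply: le_sqr_ge0; first exact: frob_ge0.
  rewrite /Z mulmxDl pythag; last first.
    by rewrite -!mulmxA ip_mull' P1T mulmxA hP1U mul0mx ip0l.
  rewrite (frob_proj V x hV) -!mulmxA frob_iso //.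
  apply: lerD => //; apply: sq_le; first exact: frob_ge0.
  apply: le_trans (frob_projC _ _ hU) _; rewrite -/P1.
  rewrite frob_iso //; apply: le_trans (frob_projT _ _ hV') _.
  by rewrite -/P2.
have ipZ : mx_inner Z (L0 + H) = sig + mx_inner (U *m V^T) H + n.
  rewrite /Z ipDl !(ipDr L0 H) (ip_svd_eq _ _ _ _ svdL0) -!addrA; congr (_ + _).
  congr (_ + _).
  have -> : mx_inner (P1 *m (U' *m V'^T) *m P2) L0 = 0.
    by rewrite hL0 ip_mulr ip_mull P1T !mulmxA hP1U !mul0mx ip0r.
  rewrite add0r ip_mulr ip_mull P1T P2T nucX -(ip_svd_eq _ _ _ _ svdX).
  by rewrite /X mulmxA.
have nucLt : sig + mx_inner (U *m V^T) H + n <= nuc_norm (L0 + H).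
  by rewrite -ipZ -[nuc_norm _]mul1r; apply: nuc_dual.
have PiU : forall Y : 'M_(rn, n2), Pi_space G U V (U *m Y).
  move=> Y; have -> : U *m Y = E *m col_mx 0 Y by rewrite mul_row_col mulmx0 add0r.
  exact: Pi_E.
have WH : mx_inner W H = mx_inner W X.
  have e1 : H - P1 *m H = U *m (U^T *m H).
    by rewrite /P1 mulmxBl mul1mx opprB addrC subrK mulmxA.
  have e2 : X = P1 *m H - P1 *m H *m V *m V^T by rewrite /X /P2 mulmxBr mulmx1 !mulmxA.
  have e3 : H - X = U *m (U^T *m H) + P1 *m H *m V *m V^T.
    by rewrite e2 opprB addrCA addrC e1.
  have : mx_inner W (H - X) = 0.
    by rewrite e3 ipDr (hWorth _ (PiU _)) (hWorth _ (Pi_V _ _ _ _)) addr0.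
  by rewrite ipBr => /eqP; rewrite subr_eq0 => /eqP.
have WX : mx_inner W X <= 9 / 10 * n by apply: nuc_dual.
have UVE : U *m V^T = lam *: Y0 - W by rewrite -hcert addrK.
have Y0G : mx_inner Y0 (G *m Dl^T) = 0.
  have : lam * mx_inner Y0 (G *m Dl^T) = 0.
    rewrite -ipZl -hcert ip_mull' mulmxDr mulmxA hGU hGW.
    by rewrite mul0mx add0r ip0l.
  by move=> /eqP; rewrite mulf_eq0 gt_eqF //= => /eqP.
have Y0H : mx_inner Y0 H = - mx_inner Y0 K.
  by rewrite KE ipNr ipDr Y0G addr0 opprK.
have hl1 := l1_ineq Om S K F D hS hF hFn.
rewrite -/Y0 in hl1.
set l := l1_norm (K - proj_Omega Om K) in hl1.
set a := frob (proj_Omega Om K).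
set b := frob (K - proj_Omega Om K).
set e := frob (K - PPi G U V K).
have a0 : 0 <= a by apply: frob_ge0.
have l0 : 0 <= l by apply: sumr_ge0 => i _; apply: sumr_ge0 => j _.
have hPD : mx_inner (proj_Omega Om D) K <= 1 / 4 * a.
  rewrite ip_PO; apply: le_trans (CS _ _) _; apply: ler_wpM2r => //.
have hb : b <= l by apply: frob_le_l1.
have hK : frob K <= a + b.
  by rewrite {1}(_ : K = proj_Omega Om K + (K - proj_Omega Om K)) ?frobD // addrC subrK.
have ha : a <= 1 / 4 * frob K + e.
  rewrite /a {1}(_ : K = PPi G U V K + (K - PPi G U V K)); last by rewrite addrC subrK.
  rewrite POD; apply: le_trans (frobD _ _) _; apply: lerD; first exact: hop'.
  exact: PO_le.
have EG' : (1%:M - E *m E^T) *m G = 0 := EG _ _ hG hUG.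
have EU' : (1%:M - E *m E^T) *m U = 0 := EU _ _ hU hGU.
have he : e <= n.
  apply: le_trans fXn; rewrite /e.
  have -> : K - PPi G U V K = - ((1%:M - E *m E^T) *m X).
    rewrite /PPi opprB addrC subrK -/E -/P2 KE mulmxN mulNmx; congr (- _).
    rewrite (mulmxDr (1%:M - E *m E^T) H) mulmxA EG' mul0mx addr0 /X !mulmxA.
    congr (_ *m _ *m _).
    by rewrite /P1 mulmxBr mulmx1 mulmxA EU' mul0mx subr0.
  by rewrite frobN; apply: frob_projC.
have lamv : 0 <= lam by apply: ltW.
have hbound : nuc_norm L0 + lam * l1_norm S + n * (1 / 10 - lam / 3) + lam * l / 60
    <= nuc_norm Lt + lam * l1_norm St.
  rewrite nucL0 LtE StE.
  have h1 : lam * (l1_norm S + mx_inner Y0 K + 1 / 10 * l - mx_inner (proj_Omega Om D) K)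
     <= lam * l1_norm (S + K) by apply: ler_wpM2l.
  have h2 : lam * mx_inner (proj_Omega Om D) K <= lam * (1 / 4 * a) by apply: ler_wpM2l.
  have h3 : lam * a <= lam * (l / 3 + 4 / 3 * n) by apply: ler_wpM2l; lra.
  rewrite UVE ipBl ipZl Y0H in nucLt.
  lra.
have c1 : 0 < 1 / 10 - lam / 3 by lra.
have t1 := mulr_ge0 n0 (ltW c1); have t2 := mulr_ge0 lamv l0.
split; first by lra.
move=> heq.
have n00 : n = 0.
  apply: le_anti; rewrite n0 andbT.
  have : n * (1 / 10 - lam / 3) <= 0 by lra.
  by rewrite pmulr_lle0.
have l00 : l = 0.
  apply: le_anti; rewrite l0 andbT.
  have : lam * l <= 0 by lra.
  by rewrite pmulr_rle0.
have X00 : X = 0 by apply: frob_eq0; apply: le_anti; rewrite frob_ge0 andbT -n00.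
have b0 : b = 0 by apply: le_anti; rewrite frob_ge0 andbT -l00.
have a00 : a = 0 by apply: le_anti; rewrite a0 andbT; lra.
have K0 : K = 0.
  rewrite (_ : K = proj_Omega Om K + (K - proj_Omega Om K)); last by rewrite addrC subrK.
  by rewrite (frob_eq0 _ b0) (frob_eq0 _ a00) addr0.
have StS : St = S by rewrite StE K0 addr0.
have HG : H = - (G *m Dl^T).
  by apply/eqP; rewrite -addr_eq0; apply/eqP; rewrite -hHK K0 addr0.
have nucLt' : nuc_norm Lt = sig by move: heq; rewrite StS nucL0 => /addIr.
have P1G : P1 *m G = G by rewrite /P1 mulmxBl mul1mx -mulmxA hUG mulmx0 subr0.
have DlP2 : Dl^T *m P2 = 0.
  have : G^T *m X = 0 by rewrite X00 mulmx0.
  by rewrite /X HG mulmxN mulNmx mulmxN (mulmxA P1) P1G -!mulmxA mulmxA hG mul1mx => /eqP; rewrite oppr_eq0 => /eqP.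
set C := Dl^T *m V.
have DlT : Dl^T = C *m V^T.
  have eP : 1%:M = P2 + V *m V^T by rewrite /P2 subrK.
  by rewrite -[LHS]mulmx1 eP mulmxDr DlP2 add0r mulmxA.
have LtC : Lt = (U *m diag_mx sigma - G *m C) *m V^T.
  by rewrite LtE hL0 HG DlT mulmxBl !mulmxA.
set c := mx_inner C C.
have c0 : 0 <= c by apply: ipxx_ge0.
have sig0 : 0 <= sig by apply: sumr_ge0 => i _; apply: ltW.
set ep := 1 / (sig + 1).
have sp : 0 < sig + 1 by lra.
have ep0 : 0 < ep by rewrite /ep divr_gt0.
have epE : ep * (sig + 1) = 1 by rewrite /ep mul1r mulVf // gt_eqF.
set Ze := (U - ep *: (G *m C)) *m V^T.
have hZe : forall x : 'cV_n2, frob (Ze *m x) <= (1 + ep ^+ 2 * c / 2) * frob x.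
  move=> x; set y := V^T *m x.
  have fy : frob y <= frob x by apply: frob_projT.
  have fCy : frob (C *m y) <= frob C * frob y by apply: frob_mul.
  have fC : frob C ^+ 2 = c by rewrite frob_sqr.
  apply: le_sqr_ge0; first by rewrite mulr_ge0 ?frob_ge0 //; nra.
  rewrite /Ze -mulmxA -/y mulmxBl pythag; last first.
    by rewrite ipNr -scalemxAl ipZr -mulmxA ip_mull' mulmxA hGU mul0mx ip0l mulr0 oppr0.
  rewrite frobN -scalemxAl frobZ -mulmxA (frob_iso U y hU) (frob_iso G (C *m y) hG) exprMn.
  rewrite ger0_norm; last exact: ltW.
  have fy0 := frob_ge0 y; have fx0 := frob_ge0 x; have fC0 := frob_ge0 C.
  have fCy0 := frob_ge0 (C *m y).
  have h1 : frob (C *m y) ^+ 2 <= c * frob y ^+ 2 by rewrite -fC -exprMn; apply: sq_le.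
  have h2 : frob y ^+ 2 <= frob x ^+ 2 by apply: sq_le.
  have h3 : 0 <= ep ^+ 2 by apply: sqr_ge0.
  have h4 : ep ^+ 2 * frob (C *m y) ^+ 2 <= ep ^+ 2 * (c * frob y ^+ 2) by apply: ler_wpM2l.
  have h5 : frob y ^+ 2 * (1 + ep ^+ 2 * c) <= frob x ^+ 2 * (1 + ep ^+ 2 * c).
    by apply: ler_wpM2r => //; have := mulr_ge0 h3 c0; lra.
  have h6 : 0 <= frob x ^+ 2 * (ep ^+ 2 * c) ^+ 2 by rewrite mulr_ge0 ?sqr_ge0.
  have -> : ((1 + ep ^+ 2 * c / 2) * frob x) ^+ 2
     = frob x ^+ 2 * (1 + ep ^+ 2 * c) + frob x ^+ 2 * (ep ^+ 2 * c) ^+ 2 / 4 by field.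
  lra.
have ipZe : mx_inner Ze Lt = sig + ep * c.
  rewrite LtC /Ze ip_mulr trmxK -mulmxA hV mulmx1.
  rewrite ipBl !ipBr !ipZl.
  have e1 : mx_inner U (U *m diag_mx sigma) = sig.
    rewrite ip_mull' hU ip_diag; apply: eq_bigr => i _; by rewrite mxE eqxx mul1r.
  have e2 : mx_inner U (G *m C) = 0 by rewrite ip_mull' hGU ip0l.
  have e3 : mx_inner (G *m C) (U *m diag_mx sigma) = 0.
    by rewrite ip_mull' mulmxA hUG mul0mx ip0l.
  have e4 : mx_inner (G *m C) (G *m C) = c by rewrite ip_mull' mulmxA hG mul1mx.
  rewrite e1 e2 e3 e4; ring.
have hdual := nuc_dual Lt Ze _ hZe.
rewrite ipZe nucLt' in hdual.
have cz : c = 0.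
  apply: le_anti; rewrite c0 andbT.
  have : ep * c <= ep * (ep * c * sig / 2) by nra.
  have : ep * c * sig <= c by nra.
  nra.
have C0 : C = 0 by apply: ipxx_eq0.
have Dl0 : Dl = 0 by rewrite -(trmxK Dl) DlT C0 mul0mx trmx0.
have H0 : H = 0 by rewrite HG Dl0 trmx0 mulmx0 oppr0.
split => //.
- by apply/eqP; rewrite -subr_eq0; apply/eqP.
- by apply/eqP; rewrite -subr_eq0; apply/eqP.
Qed.
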